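(* For every integer $p\ge 0$, the edge set of $K_{4p+3,4p+3,4p+3}\times K_2$ can be partitioned into $2p+2$ planar subgraphs; in particular $\theta(K_{4p+3,4p+3,4p+3}\times K_2)\le 2p+2$.
   Context: The thickness $\theta(G)$ of a graph $G$ is the minimum number of planar subgraphs whose union is $G$. The Kronecker product $G\times H$ of graphs $G$ and $H$ is the graph with vertex set $V(G)\times V(H)$ in which $(g,h)$ and $(g',h')$ are adjacent if and only if $gg'\in E(G)$ and $hh'\in E(H)$. $K_{n,n,n}$ denotes the complete tripartite graph with three parts of size $n$. *)

(* Defs.v *)
From Stdlib Require Import Reals Lra.
Open Scope R_scope.

Definition cont_on_01 (f : R -> R * R) : Prop :=
  forall s, 0 <= s <= 1 ->
  forall eps, 0 < eps -> exists delta, 0 < delta /\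
    forall t, 0 <= t <= 1 -> Rabs (t - s) < delta ->
      Rabs (fst (f t) - fst (f s)) < eps /\ Rabs (snd (f t) - snd (f s)) < eps.

(* A simple graph given by a vertex predicate [vert] on a type [V] and an
   adjacency relation [E] (edges are the unordered pairs {u,v} with E u v). *)
Definition planar {V : Type} (vert : V -> Prop) (E : V -> V -> Prop) : Prop :=
  exists (pos : V -> R * R) (arc : V -> V -> R -> R * R),
    (forall u v, vert u -> vert v -> pos u = pos v -> u = v) /\
    (forall u v, E u v ->
       cont_on_01 (arc u v) /\
       arc u v 0 = pos u /\ arc u v 1 = pos v /\
       (forall s t, 0 <= s <= 1 -> 0 <= t <= 1 -> arc u v s = arc u v t -> s = t) /\
       (forall w s, vert w -> 0 < s < 1 -> arc u v s <> pos w)) /\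
    (forall u v u' v', E u v -> E u' v' ->
       ~ ((u = u' /\ v = v') \/ (u = v' /\ v = u')) ->
       forall s t, 0 <= s <= 1 -> 0 <= t <= 1 -> arc u v s = arc u' v' t ->
       exists w, (w = u \/ w = v) /\ (w = u' \/ w = v') /\ arc u v s = pos w).

(* Vertices of K_{n,n,n} x K_2: triples (a, i, s) with part a < 3, index i < n,
   and s : bool the vertex of K_2. *)
Definition kvert (n : nat) (x : nat * nat * bool) : Prop :=
  let '(a, i, _) := x in (a < 3)%nat /\ (i < n)%nat.

(* Kronecker product adjacency: (g,h) ~ (g',h') iff g g' is an edge of
   K_{n,n,n} (different parts) and h h' is an edge of K_2 (h <> h'). *)
Definition kadj (n : nat) (x y : nat * nat * bool) : Prop :=
  kvert n x /\ kvert n y /\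
  let '(a, _, s) := x in let '(b, _, t) := y in a <> b /\ s <> t.

(* Main.v *)
Require Import Defs.
From Stdlib Require Import Reals.
From Stdlib Require Import Lra Lia Psatz Arith.

Open Scope nat_scope.

Definition dd (n i j : nat) : nat := if j <=? i then i - j else n + i - j.
Definition cell (K n i j : nat) : nat :=
  let d := dd n i j in
  if d =? 0 then K else if d + 1 =? 2 * i then K else (d - 1) / 2.
Definition sgL (K n i : nat) : nat :=
  if i =? 0 then 1 else if i <=? K then 2 * (i - 1) else if i =? K + 1 then 2 * K
  else 2 * (n - i) + 1.
Definition sgc (K n c i : nat) : nat :=
  if c =? K then sgL K n i else if i <=? c + 1 then c + 1 - i else n + c + 1 - i.
Definition tuc (K n c j : nat) : nat :=
  if c =? K then sgL K n j else if c + 1 + j <=? n then n - c - 1 - j else 2 * n - c - 1 - j.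

Ltac splitif := repeat match goal with
 | |- context [?a <=? ?b] => destruct (Nat.leb_spec a b)
 | |- context [?a =? ?b] => destruct (Nat.eqb_spec a b)
 | H : context [?a <=? ?b] |- _ => destruct (Nat.leb_spec a b)
 | H : context [?a =? ?b] |- _ => destruct (Nat.eqb_spec a b)
 end.

Section Comb.
Variables K n : nat.
Hypothesis Hn : n = 2 * K + 1.
Hypothesis HK : 1 <= K.

Lemma dd_spec i j : i < n -> j < n -> dd n i j < n /\ (j <= i -> dd n i j = i - j) /\ (i < j -> dd n i j = n + i - j).
Proof. intros. unfold dd. splitif; lia. Qed.

Lemma half d c : (d - 1) / 2 = c -> d = 2 * c + 1 \/ d = 2 * c + 2 \/ d = 0.
Proof.
  intros H. pose proof (Nat.div_mod (d-1) 2 ltac:(lia)). pose proof (Nat.mod_upper_bound (d-1) 2 ltac:(lia)).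
  rewrite H in *. lia.
Qed.

Lemma cell_bound i j : i < n -> j < n -> cell K n i j < K + 1.
Proof.
  intros Hi Hj. unfold cell. destruct (dd_spec i j Hi Hj) as [B _].
  set (d := dd n i j) in *. clearbody d.
  splitif; try lia.
  pose proof (half d ((d-1)/2) eq_refl). lia.
Qed.

Lemma sgL_bound i : i < n -> sgL K n i < n.
Proof. intros. unfold sgL. splitif; lia. Qed.
Lemma sgL_inj i i' : i < n -> i' < n -> sgL K n i = sgL K n i' -> i = i'.
Proof. intros. unfold sgL in *. splitif; lia. Qed.

Lemma sgc_bound c i : c <= K -> i < n -> sgc K n c i < n.
Proof. intros. unfold sgc. pose proof (sgL_bound i). splitif; lia. Qed.
Lemma tuc_bound c i : c <= K -> i < n -> tuc K n c i < n.
Proof. intros. unfold tuc. pose proof (sgL_bound i). splitif; lia. Qed.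
Lemma sgc_inj c i i' : c <= K -> i < n -> i' < n -> sgc K n c i = sgc K n c i' -> i = i'.
Proof. intros. unfold sgc in *. destruct (Nat.eqb_spec c K). apply sgL_inj; auto. splitif; lia. Qed.
Lemma tuc_inj c i i' : c <= K -> i < n -> i' < n -> tuc K n c i = tuc K n c i' -> i = i'.
Proof. intros. unfold tuc in *. destruct (Nat.eqb_spec c K). apply sgL_inj; auto. splitif; lia. Qed.

Lemma rel c i j : c <= K -> i < n -> j < n -> cell K n i j = c ->
  (c < K -> tuc K n c j + 1 = sgc K n c i \/ tuc K n c j = sgc K n c i) /\
  (c = K -> tuc K n c j = sgc K n c i \/ tuc K n c j = sgc K n c i + 1).
Proof.
  intros Hc Hi Hj H. unfold cell in H. destruct (dd_spec i j Hi Hj) as [B [D1 D2]].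
  set (d := dd n i j) in *. clearbody d.
  unfold tuc, sgc, sgL.
  splitif; try lia; subst c;
  try (pose proof (half d ((d-1)/2) eq_refl); set (c := (d-1)/2) in *; clearbody c);
  lia.
Qed.

Lemma mono c i j i' j' : c <= K -> i < n -> j < n -> i' < n -> j' < n ->
  cell K n i j = c -> cell K n i' j' = c -> sgc K n c i < sgc K n c i' -> tuc K n c j <= tuc K n c j'.
Proof.
  intros Hc Hi Hj Hi' Hj' H1 H2 L.
  destruct (rel c i j Hc Hi Hj H1) as [A1 B1]. destruct (rel c i' j' Hc Hi' Hj' H2) as [A2 B2].
  destruct (Nat.eq_dec c K); [specialize (B1 e); specialize (B2 e) | assert (c < K) by lia; specialize (A1 H); specialize (A2 H)]; lia.
Qed.
End Comb.

Open Scope R_scope.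


Definition arcf (a b sg t : R) : R*R :=
  (a + t*(b-a), sg * (t*(1-t)) * ((b-a)*(b-a))).

Lemma arcf_cont a b sg : (sg = 1 \/ sg = -1) -> cont_on_01 (arcf a b sg).
Proof.
  intros Hsg s Hs eps Heps.
  set (D := b - a).
  assert (HR : 0 <= Rabs D) by apply Rabs_pos.
  assert (HQ : 0 <= D*D) by nra.
  exists (eps / (1 + Rabs D + D*D)).
  assert (Hpos : 0 < 1 + Rabs D + D*D) by lra.
  assert (Hd : 0 < eps / (1 + Rabs D + D*D)) by (apply Rdiv_lt_0_compat; lra).
  split; [exact Hd|].
  intros t Ht Hts.
  set (dl := eps / (1 + Rabs D + D*D)) in *.
  assert (Heq : dl * (1 + Rabs D + D*D) = eps) by (unfold dl; field; lra). clearbody dl.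
  unfold arcf; simpl. fold D.
  split.
  - replace (a + t*D - (a + s*D)) with ((t-s)*D) by ring.
    rewrite Rabs_mult.
    pose proof (Rabs_pos (t-s)). nra.
  - replace (sg * (t * (1 - t)) * (D*D) - sg * (s * (1 - s)) * (D*D))
      with (sg * ((t-s)*(1-t-s)) * (D*D)) by ring.
    assert (HDD : Rabs (D*D) = D*D) by (apply Rabs_pos_eq; lra).
    rewrite Rabs_mult, HDD, Rabs_mult, Rabs_mult.
    assert (Rabs sg = 1) by (unfold Rabs; destruct (Rcase_abs sg); lra).
    assert (Rabs (1 - t - s) <= 1) by (apply Rabs_le; lra).
    pose proof (Rabs_pos (t-s)). pose proof (Rabs_pos (1-t-s)).
    rewrite H.
    assert (Rabs (t-s) * Rabs (1-t-s) <= Rabs (t-s)) by nra.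
    assert (Rabs (t-s) * (D*D) <= dl * (D*D)) by nra.
    nra.
Qed.


Lemma core (a b c d X : R) : a <= c -> c < X -> X < d -> d <= b ->
  (X-a)*(b-X) = (X-c)*(d-X) -> a = c /\ b = d.
Proof.
  intros H1 H2 H3 H4 H.
  assert (E : (X-c)*(b-d) + (c-a)*(b-d) + (c-a)*(d-X) = 0) by nra.
  assert (0 <= (X-c)*(b-d)) by nra.
  assert (0 <= (c-a)*(b-d)) by nra.
  assert (0 <= (c-a)*(d-X)) by nra.
  assert ((X-c)*(b-d) = 0) by lra.
  assert ((c-a)*(d-X) = 0) by lra.
  split; nra.
Qed.



Lemma tt0 (t sg Q : R) : (sg = 1 \/ sg = -1) -> 0 < Q -> sg * (t*(1-t)) * Q = 0 -> t = 0 \/ t = 1.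
Proof.
  intros Hs HQ H. apply Rmult_integral in H. destruct H as [H|H]; [|lra].
  apply Rmult_integral in H. destruct H as [H|H]; [destruct Hs; lra|].
  apply Rmult_integral in H. lra.
Qed.

Lemma sorted_meet (a b c d sg sg' s t : R) :
  a < b -> c < d -> (sg = 1 \/ sg = -1) -> (sg' = 1 \/ sg' = -1) ->
  0 <= s <= 1 -> 0 <= t <= 1 ->
  arcf a b sg s = arcf c d sg' t ->
  (sg = sg' -> ~(a < c /\ c < b /\ b < d) /\ ~(c < a /\ a < d /\ d < b) /\ ~(a = c /\ b = d)) ->
  (s = 0 \/ s = 1) /\ (t = 0 \/ t = 1).
Proof.
  intros Hab Hcd Hsg Hsg' Hs Ht Heq NI.
  unfold arcf in Heq. injection Heq as Hx Hy.
  assert (HQ : 0 < (d-c)*(d-c)) by (apply Rmult_lt_0_compat; lra).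
  assert (HP : 0 < (b-a)*(b-a)) by (apply Rmult_lt_0_compat; lra).
  destruct (Req_dec s 0) as [Hs0|Hs0];
  [|destruct (Req_dec s 1) as [Hs1|Hs1]].
  - subst s. split; [left; reflexivity|].
    apply (tt0 t sg' ((d-c)*(d-c))); auto. rewrite <- Hy. ring.
  - subst s. split; [right; reflexivity|].
    apply (tt0 t sg' ((d-c)*(d-c))); auto. rewrite <- Hy. ring.
  - exfalso.
    assert (Hs' : 0 < s < 1) by lra.
    assert (HPs : 0 < s*(1-s)*((b-a)*(b-a))).
    { apply Rmult_lt_0_compat; [apply Rmult_lt_0_compat|]; lra. }
    assert (Ht' : 0 < t < 1).
    { destruct (Req_dec t 0) as [E|E]; [subst t|].
      { exfalso. assert (sg * (s*(1-s)*((b-a)*(b-a))) = 0) by (rewrite <- Rmult_assoc, Hy; ring).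
        destruct Hsg; subst sg; lra. }
      destruct (Req_dec t 1) as [E'|E']; [subst t|].
      { exfalso. assert (sg * (s*(1-s)*((b-a)*(b-a))) = 0) by (rewrite <- Rmult_assoc, Hy; ring).
        destruct Hsg; subst sg; lra. }
      lra. }
    assert (HQt : 0 < t*(1-t)*((d-c)*(d-c))).
    { apply Rmult_lt_0_compat; [apply Rmult_lt_0_compat|]; lra. }
    assert (E1 : s*(1-s)*((b-a)*(b-a)) = ((a + s*(b-a))-a)*(b-(a + s*(b-a)))) by ring.
    assert (E2 : t*(1-t)*((d-c)*(d-c)) = ((a + s*(b-a))-c)*(d-(a + s*(b-a)))) by (rewrite Hx; ring).
    assert (aX : a < a + s*(b-a) < b).
    { assert (0 < s*(b-a)) by (apply Rmult_lt_0_compat; lra).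
      assert (0 < (1-s)*(b-a)) by (apply Rmult_lt_0_compat; lra). lra. }
    assert (cX : c < a + s*(b-a) < d).
    { rewrite Hx. assert (0 < t*(d-c)) by (apply Rmult_lt_0_compat; lra).
      assert (0 < (1-t)*(d-c)) by (apply Rmult_lt_0_compat; lra). lra. }
    set (X := a + s*(b-a)) in *.
    set (P := s*(1-s)*((b-a)*(b-a))) in *.
    set (Q := t*(1-t)*((d-c)*(d-c))) in *.
    assert (Hy' : sg * P = sg' * Q) by (unfold P, Q; rewrite <- (Rmult_assoc sg), <- (Rmult_assoc sg'); exact Hy).
    clearbody P Q X.
    assert (Hss : sg = sg') by (destruct Hsg, Hsg'; subst; lra).
    destruct (NI Hss) as [N1 [N2 N3]].
    assert (Heq2 : P = Q) by (subst sg'; destruct Hsg; subst; lra).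
    assert (Hk : (X-a)*(b-X) = (X-c)*(d-X)) by lra.
    destruct (Rtotal_order a c) as [Hac|[Hac|Hac]].
    + assert (d <= b) by (destruct (Rle_dec d b); [assumption|exfalso; apply N1; lra]).
      pose proof (core a b c d X ltac:(lra) ltac:(lra) ltac:(lra) H Hk). lra.
    + destruct (Rtotal_order b d) as [Hbd|[Hbd|Hbd]].
      * symmetry in Hk. pose proof (core c d a b X ltac:(lra) ltac:(lra) ltac:(lra) ltac:(lra) Hk). lra.
      * apply N3; split; assumption.
      * pose proof (core a b c d X ltac:(lra) ltac:(lra) ltac:(lra) ltac:(lra) Hk). lra.
    + assert (b <= d) by (destruct (Rle_dec b d); [assumption|exfalso; apply N2; lra]).
      symmetry in Hk. pose proof (core c d a b X ltac:(lra) ltac:(lra) ltac:(lra) H Hk). lra.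
Qed.


Definition sgn (b : bool) : R := if b then 1 else -1.

Lemma sgn_pm b : sgn b = 1 \/ sgn b = -1.
Proof. destruct b; simpl; auto. Qed.

Lemma arcf_swap a b sg t : arcf a b sg t = arcf b a sg (1-t).
Proof. unfold arcf; f_equal; ring. Qed.

Section Book.
Context {V : Type} (vert : V -> Prop) (E : V -> V -> Prop) (x : V -> nat) (pg : V -> V -> bool).
Hypothesis Hinj : forall u v, vert u -> vert v -> x u = x v -> u = v.
Hypothesis HE : forall u v, E u v -> vert u /\ vert v /\ x u <> x v.
Hypothesis Hsym : forall u v, E u v -> E v u /\ pg v u = pg u v.
Hypothesis Hnc : forall u v u' v', E u v -> E u' v' -> pg u v = pg u' v' ->
  (x u < x v)%nat -> (x u' < x v')%nat -> ~ (x u < x u' /\ x u' < x v /\ x v < x v')%nat.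

Let arc u v := arcf (INR (x u)) (INR (x v)) (sgn (pg u v)).

Lemma oriented u v u' v' s t : E u v -> E u' v' -> (x u < x v)%nat -> (x u' < x v')%nat ->
  ~ ((u = u' /\ v = v') \/ (u = v' /\ v = u')) -> 0 <= s <= 1 -> 0 <= t <= 1 ->
  arc u v s = arc u' v' t -> (s = 0 \/ s = 1) /\ (t = 0 \/ t = 1).
Proof.
  intros H1 H2 L1 L2 Hne Hs Ht Heq.
  destruct (HE _ _ H1) as [vu [vv _]]. destruct (HE _ _ H2) as [vu' [vv' _]].
  apply lt_INR in L1. apply lt_INR in L2.
  apply (sorted_meet _ _ _ _ _ _ s t L1 L2 (sgn_pm _) (sgn_pm _) Hs Ht Heq).
  intros Hsg.
  assert (Hp : pg u v = pg u' v') by (destruct (pg u v), (pg u' v'); simpl in Hsg; auto; lra).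
  split; [|split].
  - intros [A [B C]]. apply INR_lt in A. apply INR_lt in B. apply INR_lt in C.
    apply (Hnc u v u' v'); auto. apply INR_lt; assumption. apply INR_lt; assumption.
  - intros [A [B C]]. apply INR_lt in A. apply INR_lt in B. apply INR_lt in C.
    apply (Hnc u' v' u v); auto. apply INR_lt; assumption. apply INR_lt; assumption.
  - intros [A B]. apply INR_eq in A. apply INR_eq in B. apply Hne. left.
    split; apply Hinj; auto.
Qed.

Lemma gen u v u' v' s t : E u v -> E u' v' ->
  ~ ((u = u' /\ v = v') \/ (u = v' /\ v = u')) -> 0 <= s <= 1 -> 0 <= t <= 1 ->
  arc u v s = arc u' v' t -> (s = 0 \/ s = 1) /\ (t = 0 \/ t = 1).
Proof.
  intros H1 H2 Hne Hs Ht Heq.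
  destruct (HE _ _ H1) as [_ [_ D1]]. destruct (HE _ _ H2) as [_ [_ D2]].
  destruct (Hsym _ _ H1) as [H1' P1]. destruct (Hsym _ _ H2) as [H2' P2].
  assert (S1 : arc u v s = arc v u (1-s)) by (unfold arc; rewrite P1; apply arcf_swap).
  assert (S2 : arc u' v' t = arc v' u' (1-t)) by (unfold arc; rewrite P2; apply arcf_swap).
  destruct (lt_eq_lt_dec (x u) (x v)) as [[L1|L1]|L1]; [ | contradiction | ];
  destruct (lt_eq_lt_dec (x u') (x v')) as [[L2|L2]|L2]; try contradiction.
  - exact (oriented u v u' v' s t H1 H2 L1 L2 Hne Hs Ht Heq).
  - assert (Hr := oriented u v v' u' s (1-t) H1 H2' L1 L2 ltac:(tauto) Hs ltac:(lra) ltac:(congruence)).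
    lra.
  - assert (Hr := oriented v u u' v' (1-s) t H1' H2 L1 L2 ltac:(tauto) ltac:(lra) Ht ltac:(congruence)).
    lra.
  - assert (Hr := oriented v u v' u' (1-s) (1-t) H1' H2' L1 L2 ltac:(tauto) ltac:(lra) ltac:(lra) ltac:(congruence)).
    lra.
Qed.

Lemma book_planar : planar vert E.
Proof.
  exists (fun u => (INR (x u), 0)), arc.
  split; [|split].
  - intros u v Hu Hv Heq. injection Heq as Heq. apply INR_eq in Heq. auto.
  - intros u v H. destruct (HE _ _ H) as [_ [_ D]].
    assert (DR : INR (x v) - INR (x u) <> 0).
    { intro Z. apply D. apply INR_eq. lra. }
    split; [apply arcf_cont, sgn_pm|].
    split; [unfold arc, arcf; f_equal; ring|].
    split; [unfold arc, arcf; f_equal; ring|].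
    split.
    + intros s t _ _ Heq. unfold arc, arcf in Heq. injection Heq as Hx _.
      apply Rmult_eq_reg_r with (INR (x v) - INR (x u)); auto. lra.
    + intros w s _ Hs Heq. unfold arc, arcf in Heq. injection Heq as _ Hy.
      assert (0 < s*(1-s)*((INR (x v) - INR (x u))*(INR (x v) - INR (x u)))).
      { apply Rmult_lt_0_compat; [apply Rmult_lt_0_compat; lra|].
        destruct (Rlt_or_le 0 (INR (x v) - INR (x u))); [nra|].
        assert (INR (x v) - INR (x u) < 0) by lra. nra. }
      destruct (sgn_pm (pg u v)) as [G|G]; rewrite G in Hy; nra.
  - intros u v u' v' H1 H2 Hne s t Hs Ht Heq.
    destruct (gen u v u' v' s t H1 H2 Hne Hs Ht Heq) as [A B].
    destruct (HE _ _ H1) as [vu [vv _]]. destruct (HE _ _ H2) as [vu' [vv' _]].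
    assert (P0 : forall a b g, arcf a b g 0 = (a, 0)) by (intros; unfold arcf; f_equal; ring).
    assert (P1 : forall a b g, arcf a b g 1 = (b, 0)) by (intros; unfold arcf; f_equal; ring).
    unfold arc in *.
    destruct A as [A|A]; destruct B as [B|B]; subst s t;
      rewrite ?P0, ?P1 in Heq; rewrite ?P0, ?P1;
      injection Heq as Heq; apply INR_eq in Heq.
    + exists u. repeat split; auto; try (left; apply Hinj; auto; fail); try (right; apply Hinj; auto; fail).
    + exists u. repeat split; auto; try (left; apply Hinj; auto; fail); try (right; apply Hinj; auto; fail).
    + exists v. repeat split; auto; try (left; apply Hinj; auto; fail); try (right; apply Hinj; auto; fail).
    + exists v. repeat split; auto; try (left; apply Hinj; auto; fail); try (right; apply Hinj; auto; fail).
Qed.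
End Book.

Open Scope nat_scope.

Definition idx (v : nat*nat*bool) : nat := let '(_, i, _) := v in i.
Definition side (v : nat*nat*bool) : bool := let '(_, _, s) := v in s.
Definition fidx (u v : nat*nat*bool) : nat := if side u then idx v else idx u.
Definition tidx (u v : nat*nat*bool) : nat := if side u then idx u else idx v.

Definition blk (v : nat*nat*bool) : nat :=
  let '(g, _, s) := v in
  if s then (match g with 0 => 3 | 1 => 1 | _ => 5 end)
  else (match g with 0 => 0 | 1 => 4 | _ => 2 end).

Definition topb (r r' : nat) : bool :=
  match r, r' with
  | 0, 1 | 1, 0 | 2, 3 | 3, 2 | 4, 5 | 5, 4 => true
  | _, _ => false end.

Section Struct.
Variables (n : nat) (P : nat -> nat -> Prop) (sg tu : nat -> nat).
Hypothesis Hsb : forall i, (i < n)%nat -> (sg i < n)%nat.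
Hypothesis Htb : forall i, (i < n)%nat -> (tu i < n)%nat.
Hypothesis Hsi : forall i i', (i < n)%nat -> (i' < n)%nat -> sg i = sg i' -> i = i'.
Hypothesis Hti : forall i i', (i < n)%nat -> (i' < n)%nat -> tu i = tu i' -> i = i'.
Hypothesis HM : forall i j i' j', (i < n)%nat -> (j < n)%nat -> (i' < n)%nat -> (j' < n)%nat ->
  P i j -> P i' j' -> (sg i < sg i')%nat -> (tu j <= tu j')%nat.

Definition ord (v : nat*nat*bool) : nat :=
  let '(_, i, s) := v in if s then (n - 1 - tu i)%nat else sg i.
Definition xpos (v : nat*nat*bool) : nat := (blk v * n + ord v)%nat.
Definition EE (u v : nat*nat*bool) : Prop := kadj n u v /\ P (fidx u v) (tidx u v).
Definition pgf (u v : nat*nat*bool) : bool := topb (blk u) (blk v).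

Lemma xinj u v : kvert n u -> kvert n v -> xpos u = xpos v -> u = v.
Proof.
  destruct u as [[g i] s], v as [[h j] t]; unfold kvert, xpos, ord, blk; simpl.
  intros [Hg Hi] [Hh Hj] Heq.
  pose proof (Hsb i Hi); pose proof (Htb i Hi); pose proof (Hsb j Hj); pose proof (Htb j Hj).
  destruct g as [|[|[|g]]]; try lia; destruct h as [|[|[|h]]]; try lia;
  destruct s, t; try lia;
  try (assert (i = j) by (apply Hsi; auto; lia); subst; reflexivity);
  try (assert (i = j) by (apply Hti; auto; lia); subst; reflexivity).
Qed.

Lemma shape u v : EE u v -> (xpos u < xpos v)%nat ->
  exists i j, (i < n)%nat /\ (j < n)%nat /\ P i j /\
  ( (u = (0,i,false) /\ v = (1,j,true))
  \/ (u = (1,j,true) /\ v = (2,i,false))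
  \/ (u = (2,i,false) /\ v = (0,j,true))
  \/ (u = (0,j,true) /\ v = (1,i,false))
  \/ (u = (1,i,false) /\ v = (2,j,true))
  \/ (u = (0,i,false) /\ v = (2,j,true)))%nat.
Proof.
  destruct u as [[g i] s], v as [[h j] t]; unfold EE, kadj, kvert, xpos, ord, blk, fidx, tidx, idx, side; simpl.
  intros [[[Hg Hi] [[Hh Hj] [Hgh Hst]]] HP] Hlt.
  pose proof (Hsb i Hi); pose proof (Htb i Hi); pose proof (Hsb j Hj); pose proof (Htb j Hj).
  destruct g as [|[|[|g]]]; try lia; destruct h as [|[|[|h]]]; try lia;
  destruct s, t; try lia; try congruence.
  all: first [ exists i, j; repeat split; auto; tauto
             | exists j, i; repeat split; auto; tauto ].
Qed.

Lemma nc u v u' v' : EE u v -> EE u' v' -> pgf u v = pgf u' v' ->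
  (xpos u < xpos v)%nat -> (xpos u' < xpos v')%nat ->
  ~ (xpos u < xpos u' /\ xpos u' < xpos v /\ xpos v < xpos v')%nat.
Proof.
  intros H1 H2 Hp L1 L2.
  destruct (shape u v H1 L1) as [i [j [Hi [Hj [HP S1]]]]].
  destruct (shape u' v' H2 L2) as [i' [j' [Hi' [Hj' [HP' S2]]]]].
  pose proof (HM i j i' j' Hi Hj Hi' Hj' HP HP').
  pose proof (HM i' j' i j Hi' Hj' Hi Hj HP' HP).
  pose proof (Hsb i Hi); pose proof (Htb j Hj); pose proof (Hsb i' Hi'); pose proof (Htb j' Hj').
  pose proof (Hsi i i' Hi Hi'). pose proof (Hti j j' Hj Hj').
  clear L1 L2.
  destruct S1 as [[-> ->]|[[-> ->]|[[-> ->]|[[-> ->]|[[-> ->]|[-> ->]]]]]];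
  destruct S2 as [[-> ->]|[[-> ->]|[[-> ->]|[[-> ->]|[[-> ->]|[-> ->]]]]]];
  unfold pgf in Hp; simpl in Hp; try discriminate;
  unfold xpos, ord, blk; simpl; lia.
Qed.

Lemma struct_planar : planar (kvert n) EE.
Proof.
  apply (book_planar (kvert n) EE xpos pgf).
  - apply xinj.
  - intros u v H. split; [apply H|]. split; [apply H|].
    destruct u as [[g i] s], v as [[h j] t]; destruct H as [[[Hg Hi] [[Hh Hj] [Hgh Hst]]] _].
    unfold xpos, ord, blk.
    pose proof (Hsb i Hi); pose proof (Htb i Hi); pose proof (Hsb j Hj); pose proof (Htb j Hj).
    destruct g as [|[|[|g]]]; try lia; destruct h as [|[|[|h]]]; try lia;
    destruct s, t; try lia; congruence.
  - intros u v H. destruct u as [[g i] s], v as [[h j] t]; destruct H as [[[Hg Hi] [[Hh Hj] [Hgh Hst]]] HP].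
    split.
    + unfold EE, kadj, kvert. split; [repeat split; auto|].
      destruct s, t; try congruence; exact HP.
    + unfold pgf, blk.
      destruct g as [|[|[|g]]]; try lia; destruct h as [|[|[|h]]]; try lia;
      destruct s, t; reflexivity.
  - apply nc.
Qed.
End Struct.


Theorem lemma4p5 : forall p : nat,
  exists col : nat * nat * bool -> nat * nat * bool -> nat,
    (forall u v, kadj (4 * p + 3) u v ->
       (col u v < 2 * p + 2)%nat /\ col u v = col v u) /\
    (forall c, (c < 2 * p + 2)%nat ->
       planar (kvert (4 * p + 3)) (fun u v => kadj (4 * p + 3) u v /\ col u v = c)).
Proof.
  intros p.
  set (K := 2 * p + 1).
  assert (Hn : 4 * p + 3 = 2 * K + 1) by (unfold K; lia).
  assert (HK : 1 <= K) by (unfold K; lia).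
  exists (fun u v => cell K (4 * p + 3) (fidx u v) (tidx u v)).
  split.
  - intros u v H.
    destruct u as [[g i] s], v as [[h j] t]; destruct H as [[Hg Hi] [[Hh Hj] [Hgh Hst]]].
    unfold fidx, tidx, side, idx.
    destruct s, t; try congruence.
    + split; [|reflexivity]. pose proof (cell_bound K _ Hn HK j i Hj Hi). unfold K in *; lia.
    + split; [|reflexivity]. pose proof (cell_bound K _ Hn HK i j Hi Hj). unfold K in *; lia.
  - intros c Hc.
    assert (HcK : c <= K) by (unfold K; lia).
    exact (struct_planar (4 * p + 3) (fun i j => cell K (4 * p + 3) i j = c)
             (sgc K (4 * p + 3) c) (tuc K (4 * p + 3) c)
             (fun i Hi => sgc_bound K _ Hn HK c i HcK Hi)
             (fun i Hi => tuc_bound K _ Hn HK c i HcK Hi)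
             (fun i i' Hi Hi' => sgc_inj K _ Hn HK c i i' HcK Hi Hi')
             (fun i i' Hi Hi' => tuc_inj K _ Hn HK c i i' HcK Hi Hi')
             (fun i j i' j' Hi Hj Hi' Hj' => mono K _ Hn HK c i j i' j' HcK Hi Hj Hi' Hj')).
Qed.
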